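(* Let $n\ge2$, $0<r<n$, and $E_1\ge E_2\ge\dots\ge E_n>0$. For a set $\mathcal{A}=\{a_1<a_2<\dots<a_r\}\subseteq[1:n]$ of size $r$, let (P-$\mathcal{A}$) be the linear program $$\max_{\mathbf{p}\in\mathcal{I},\,\gamma\in\mathbb{R}}\ \sum_{j=1}^np_jE_j-\frac12\sum_{j\in\mathcal{A}}p_jE_j\quad\text{s.t. } p_aE_a\ge\gamma\ \forall a\in\mathcal{A},\quad \gamma\ge p_tE_t\ \forall t\in[1:n]\setminus\mathcal{A}.$$ Then the optimal value of (P-$\{1,2,\dots,r\}$) is at least the optimal value of (P-$\mathcal{A}$) for every such $\mathcal{A}$.
   Context: $\mathcal{I}=\{\mathbf{p}\in[0,1]^n:\sum_kp_k=r\}$; $[1:n]=\{1,\dots,n\}$. (For $m=2$, maximizing $f^{\mathrm{worst}}(\mathbf{p})=\sum_kp_kE_k-\frac12(\text{sum of the }r\text{ largest }p_kE_k)$ over $\mathcal{I}$ is the best of the programs (P-$\mathcal{A}$).) *)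

(* Defs.v *)
From HB Require Import structures.
From mathcomp Require Import all_boot all_order all_algebra.
From mathcomp Require Import classical_sets reals.
Set Implicit Arguments. Unset Strict Implicit. Unset Printing Implicit Defensive.
Import Order.TTheory GRing.Theory Num.Theory.
Local Open Scope ring_scope.
Local Open Scope classical_set_scope.

(* Indices [1:n] are represented by 'I_n (0-based: index i stands for i+1). *)

Definition in_I (R : realType) (n r : nat) (p : 'I_n -> R) : Prop :=
  (forall k, 0 <= p k <= 1) /\ \sum_(k < n) p k = r%:R.

Definition PA_feasible (R : realType) (n r : nat) (E : 'I_n -> R)
    (A : {set 'I_n}) (p : 'I_n -> R) (gamma : R) : Prop :=
  [/\ in_I r p,
      (forall a, a \in A -> gamma <= p a * E a) &
      (forall t, t \notin A -> p t * E t <= gamma)].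

Definition PA_obj (R : realType) (n : nat) (E : 'I_n -> R)
    (A : {set 'I_n}) (p : 'I_n -> R) : R :=
  \sum_(j < n) p j * E j - 2^-1 * \sum_(j in A) p j * E j.

(* Optimal value of (P-A): supremum of the objective over the feasible set
   (the maximum is attained, the feasible set being nonempty and compact). *)
Definition PA_value (R : realType) (n r : nat) (E : 'I_n -> R)
    (A : {set 'I_n}) : R :=
  sup [set PA_obj E A p | p in [set p | exists gamma, PA_feasible r E A p gamma]].

Definition top_set (n r : nat) : {set 'I_n} := [set i : 'I_n | (i < r)%N].

(* Main.v *)
Require Import Defs.
From HB Require Import structures.
From mathcomp Require Import all_boot all_order all_algebra.
From mathcomp Require Import classical_sets reals boolp.
From mathcomp Require Import ring lra.
Import Order.TTheory GRing.Theory Num.Theory.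
Local Open Scope ring_scope.

Section S.
Variable R : realType.

Lemma swap_scalar (u w e f g : R) : 0 < e -> e <= f -> 0 <= u <= 1 -> 0 <= w <= 1 ->
  w * f <= g -> g <= u * e ->
  exists x, [/\ 0 <= x <= 1, 0 <= u + w - x <= 1, x * e <= g, g <= (u + w - x) * f &
     2^-1 * (u * e) + w * f <= x * e + 2^-1 * ((u + w - x) * f)].
Proof.
move=> e0 ef /andP[u0 u1] /andP[w0 w1] wg gu.
have f0 : 0 < f by apply: lt_le_trans ef.
set x0 := w * f / e.
have x0e : x0 * e = w * f by rewrite /x0 divfK // gt_eqF.
have g0 : 0 <= g by apply: le_trans wg; nra.
have key : forall x, (x0 <= x) = (w * f <= x * e).
  by move=> x; rewrite -x0e ler_pM2r.
have Hx0 : 2^-1 * (u * e) + w * f <= x0 * e + 2^-1 * ((u + w - x0) * f).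
  rewrite x0e.
  suff : u * e <= (u + w - x0) * f by lra.
  have : (u * e - w * f) * (f - e) >= 0 by nra.
  have : e * ((u + w - x0) * f) - e * (u * e) = (u*e - w*f) * (f - e).
    have -> : e * ((u + w - x0) * f) = (u + w) * e * f - (x0 * e) * f by ring.
    rewrite x0e. ring.
  move=> H1 H2. rewrite -(ler_pM2l e0). lra.
case: (lerP f (2 * e)) => hf.
- set z := u * e / f.
  have zf : z * f = u * e by rewrite /z divfK // gt_eqF.
  set y := g / e.
  have ye : y * e = g by rewrite /y divfK // gt_eqF.
  have zu : z <= u by rewrite -(ler_pM2r f0) zf; nra.
  have z0 : 0 <= z by rewrite -(ler_pM2r f0) zf mul0r; nra.
  have yu : y <= u by rewrite -(ler_pM2r e0) ye.
  have y0 : 0 <= y by rewrite -(ler_pM2r e0) ye mul0r.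
  have yw : w <= y by rewrite -(ler_pM2r e0) ye; nra.
  have x0y : x0 <= y by rewrite key ye.
  have x0z : x0 <= u + w - z.
    rewrite key -(ler_pM2r f0).
    have -> : (u + w - z) * e * f = (u + w) * e * f - (z * f) * e by ring.
    rewrite zf; nra.
  exists (Num.min y (u + w - z)).
  have [hm|hm] := leP y (u + w - z).
  + split; [lra|lra|by rewrite ye|nra|].
    suff : x0 * e + 2^-1 * ((u + w - x0) * f) <= y * e + 2^-1 * ((u + w - y) * f) by lra.
    nra.
  + split; [lra|lra|nra|nra|].
    suff : x0 * e + 2^-1 * ((u + w - x0) * f) <= (u + w - z) * e + 2^-1 * ((u + w - (u + w - z)) * f) by lra.
    nra.
- have x0w : w <= x0 by rewrite -(ler_pM2r e0) x0e; nra.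
  exists (Num.max 0 (u + w - 1)).
  have [hm|hm] := leP 0 (u + w - 1).
  + split; [lra|lra|nra|nra|].
    suff : x0 * e + 2^-1 * ((u + w - x0) * f) <= (u + w - 1) * e + 2^-1 * ((u + w - (u + w - 1)) * f) by lra.
    nra.
  + split; [lra|lra|nra|nra|].
    suff : x0 * e + 2^-1 * ((u + w - x0) * f) <= 0 * e + 2^-1 * ((u + w - 0) * f) by lra.
    nra.
Qed.
End S.

Section T.
Variables (R : realType) (n r : nat) (E : 'I_n -> R).
Hypothesis hEmono : forall i j : 'I_n, (i <= j)%N -> E j <= E i.
Hypothesis hEpos : forall i : 'I_n, 0 < E i.

Lemma obj_formula (A : {set 'I_n}) p : PA_obj E A p =
  \sum_j (if j \in A then 2^-1 else 1) * (p j * E j).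
Proof.
rewrite /PA_obj mulr_sumr [X in _ - X]big_mkcond /= -sumrB; apply: eq_bigr => j _.
by case: (j \in A); rewrite ?mulr0 ?subr0 ?mul1r //; lra.
Qed.

Lemma sum2 (F : 'I_n -> R) a i : a != i ->
  \sum_j F j = F a + F i + \sum_(j | (j != a) && (j != i)) F j.
Proof. by move=> ai; rewrite (bigD1 a) //= (bigD1 i) 1?eq_sym //= addrA. Qed.

Lemma obj_bounds (A : {set 'I_n}) p g : PA_feasible r E A p g ->
  0 <= PA_obj E A p <= \sum_j E j.
Proof.
case=> [[hp _] _ _]; rewrite obj_formula; apply/andP; split.
  apply: sumr_ge0 => j _; have := hp j; have := hEpos j.
  case: (j \in A) => H /andP[H1 H2]; nra.
apply: ler_sum => j _; have := hp j; have := hEpos j.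
case: (j \in A) => H /andP[H1 H2]; nra.
Qed.

Lemma swap_step (A : {set 'I_n}) (a i : 'I_n) p g : a \in A -> i \notin A -> (i <= a)%N ->
  PA_feasible r E A p g -> exists q,
  PA_feasible r E (i |: (A :\ a)) q g /\ PA_obj E A p <= PA_obj E (i |: (A :\ a)) q.
Proof.
move=> aA iA ia [[hp hs] hA hnA].
have ai : a != i by apply: contraNneq iA => <-.
have [x [hx hx' hxa hxi hobj]] := @swap_scalar R _ _ _ _ _ (hEpos a) (hEmono _ _ ia) (hp a) (hp i)
   (hnA i iA) (hA a aA).
pose q j := if j == a then x else if j == i then p a + p i - x else p j.
have qa : q a = x by rewrite /q eqxx.
have qi : q i = p a + p i - x by rewrite /q eq_sym (negbTE ai) eqxx.
have qo : forall j, j != a -> j != i -> q j = p j.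
  by move=> j ja ji; rewrite /q (negbTE ja) (negbTE ji).
have inA' : forall j, (j \in i |: (A :\ a)) = (j == i) || ((j != a) && (j \in A)).
  by move=> j; rewrite !inE.
exists q; split; first split.
- split.
  + move=> k; case: (eqVneq k a) => [->|ka]; first by rewrite qa.
    case: (eqVneq k i) => [->|ki]; first by rewrite qi.
    by rewrite qo.
  + rewrite (sum2 _ _ _ ai) qa qi -hs (sum2 _ _ _ ai).
    have -> : \sum_(j | (j != a) && (j != i)) q j = \sum_(j | (j != a) && (j != i)) p j.
      by apply: eq_bigr => j /andP[ja ji]; rewrite qo.
    lra.
- move=> j; rewrite inA'; case: (eqVneq j i) => [->|ji] /=; first by rewrite qi.
  move=> /andP[ja jA]; rewrite qo //; exact: hA.
- move=> j; rewrite inA' negb_or; case: (eqVneq j i) => [->|ji] //=.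
  rewrite negb_and negbK; case: (eqVneq j a) => [->|ja] /=; first by rewrite qa.
  by move=> jA; rewrite qo //; apply: hnA.
- rewrite !obj_formula (sum2 _ _ _ ai) [X in _ <= X](sum2 _ _ _ ai).
  rewrite !inA' eqxx (negbTE ai) /= aA eq_sym (negbTE ai) /= (negbTE iA) qa qi.
  have -> : \sum_(j | (j != a) && (j != i))
     (if j \in i |: (A :\ a) then 2^-1 else 1) * (q j * E j) =
     \sum_(j | (j != a) && (j != i)) (if j \in A then 2^-1 else 1) * (p j * E j).
    by apply: eq_bigr => j /andP[ja ji]; rewrite inA' (negbTE ji) ja qo.
  by rewrite !mul1r eqxx /=; lra.
Qed.

End T.

Lemma card_top n r : (r <= n)%N -> #|top_set n r| = r.
Proof.
move=> H.
have -> : top_set n r = [set widen_ord H i | i in 'I_r].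
  apply/setP => j; rewrite !inE; apply/idP/imsetP.
  - move=> jr; exists (Ordinal jr) => //; exact: val_inj.
  - by case=> i _ ->; rewrite /= ltn_ord.
rewrite card_imset ?card_ord //.
by move=> x y /(congr1 val) /= /val_inj.
Qed.

Lemma claim (R : realType) (n r : nat) (E : 'I_n -> R)
  (hrn : (r < n)%N)
  (hEmono : forall i j : 'I_n, (i <= j)%N -> E j <= E i)
  (hEpos : forall i : 'I_n, 0 < E i) m :
  forall (A : {set 'I_n}), (\sum_(j in A) (j : nat) <= m)%N -> #|A| = r ->
  forall p g, PA_feasible r E A p g -> exists q g',
    PA_feasible r E (top_set n r) q g' /\ PA_obj E A p <= PA_obj E (top_set n r) q.
Proof.
set T := top_set n r.
have cT : #|T| = r by apply: card_top; exact: ltnW.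
have step : forall A : {set 'I_n}, #|A| = r -> A != T -> exists a i,
   [/\ a \in A, i \notin A, (i <= a)%N, #|i |: (A :\ a)| = r &
     (\sum_(j in i |: (A :\ a)) (j : nat) < \sum_(j in A) (j : nat))%N].
  move=> A hA neq.
  have /subsetPn [a aA aT] : ~~ (A \subset T).
    apply/negP => /subset_cardP; rewrite hA cT => /(_ erefl) eqAT.
    by move/eqP: neq; apply; apply/setP.
  have /subsetPn [i iT iA] : ~~ (T \subset A).
    apply/negP => /subset_cardP; rewrite hA cT => /(_ erefl) eqAT.
    by move/eqP: neq; apply; apply/setP => x; rewrite eqAT.
  move: aT iT; rewrite !inE -leqNgt => aT iT.
  have ia : (i < a)%N by apply: leq_trans aT.
  have iA' : i \notin A :\ a by rewrite !inE negb_and iA orbT.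
  exists a, i; split => //; first exact: ltnW.
  - by rewrite cardsU1 iA' -hA (cardsD1 a A) aA.
  - by rewrite big_setU1 //= (big_setD1 a aA) /= ltn_add2r.
elim: m => [|m IH] A hm hA p g hf.
- case: (eqVneq A T) => [eAT|neq]; first by rewrite -eAT; exists p, g; split.
  have [a [i [aA iA ia _ hlt]]] := step A hA neq.
  by move: hm; rewrite leqn0 => /eqP hm; rewrite hm in hlt.
- case: (eqVneq A T) => [eAT|neq]; first by rewrite -eAT; exists p, g; split.
  have [a [i [aA iA ia cA' hlt]]] := step A hA neq.
  have [q [hq hob]] := @swap_step R n r E hEmono hEpos A a i p g aA iA ia hf.
  have hm' : (\sum_(j in i |: (A :\ a)) (j : nat) <= m)%N by rewrite -ltnS; apply: leq_trans hlt hm.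
  have [q' [g' [hq' hob']]] := IH _ hm' cA' _ _ hq.
  by exists q', g'; split => //; apply: le_trans hob'.
Qed.

Theorem lemma9 (R : realType) (n r : nat) (E : 'I_n -> R)
  (hn : (2 <= n)%N) (hr0 : (0 < r)%N) (hrn : (r < n)%N)
  (hEmono : forall i j : 'I_n, (i <= j)%N -> E j <= E i)
  (hEpos : forall i : 'I_n, 0 < E i)
  (A : {set 'I_n}) (hA : #|A| = r) :
  PA_value r E A <= PA_value r E (top_set n r).
Proof.
rewrite /PA_value.
set SA := (X in sup X <= _).
set ST := (X in _ <= sup X).
have ubT : has_ubound ST.
  exists (\sum_j E j) => y [p [g hf] <-].
  by case/andP: (@obj_bounds R n r E hEpos _ _ _ hf).
have geT : 0 <= sup ST.
  case: (pselect (ST !=set0)%classic) => [[y hy]|emp].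
    apply: le_trans (ub_le_sup ubT hy).
    case: hy => p [g hf] <-.
    by case/andP: (@obj_bounds R n r E hEpos _ _ _ hf).
  have -> : ST = set0%classic.
    by apply/seteqP; split => // x Hx; exfalso; apply: emp; exists x.
  by rewrite sup0.
case: (pselect (SA !=set0)%classic) => [ne|emp].
  apply: ge_sup ne _ => y [p [g hf] <-].
  have [q [g' [hq hob]]] := @claim R n r E hrn hEmono hEpos _ A (leqnn _) hA _ _ hf.
  apply: le_trans hob (ub_le_sup ubT _); exists q => //; by exists g'.
have -> : SA = set0%classic.
  by apply/seteqP; split => // x Hx; exfalso; apply: emp; exists x.
by rewrite sup0.
Qed.
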